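(* For every integer $n\ge 2$ and every integer $k\ge 3$, $\chi_i(S_{C_k}^n)=3$, where $C_k$ is the cycle on $k$ vertices.
   Context: For a graph $H$, an injective $k$-coloring is a map $f:V(H)\to\{1,\dots,k\}$ such that any two distinct vertices $u,w$ with $f(u)=f(w)$ have no common neighbor; $\chi_i(H)$ is the least such $k$. For a graph $G$ and positive integer $n$, the generalized Sierpiński graph $S_G^n$ has vertex set $V(G)^n$, and $(u_1,\dots,u_n)$, $(v_1,\dots,v_n)$ are adjacent if and only if there is $d\in\{1,\dots,n\}$ with $u_i=v_i$ for $i<d$, $u_dv_d\in E(G)$, and $u_i=v_d$, $v_i=u_d$ for all $i>d$. *)

(* Defs.v *)
From mathcomp Require Import all_boot.
Set Implicit Arguments. Unset Strict Implicit. Unset Printing Implicit Defensive.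

Definition injective_coloring (T : finType) (adj : rel T) (c : nat)
  (f : T -> 'I_c) : Prop :=
  forall u w : T, u != w -> f u = f w -> ~ (exists x : T, adj u x && adj w x).

Definition injective_colorable (T : finType) (adj : rel T) (c : nat) : Prop :=
  exists f : T -> 'I_c, injective_coloring adj f.

Definition injective_chromatic_number (T : finType) (adj : rel T) (m : nat) : Prop :=
  injective_colorable adj m /\ (forall c, injective_colorable adj c -> m <= c).

Definition cycle_adj (k : nat) : rel 'I_k :=
  fun i j => (j == (i.+1 %% k) :> nat) || (i == (j.+1 %% k) :> nat).

(* Generalized Sierpinski graph S_G^n with vertex set V(G)^n, coordinates
   indexed by 'I_n (coordinate d corresponds to d+1 in the paper). *)
Definition sierpinski_adj (V : finType) (adj : rel V) (n : nat) :
  rel {ffun 'I_n -> V} :=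
  fun u v => [exists d : 'I_n,
    [&& [forall i : 'I_n, (i < d) ==> (u i == v i)],
        adj (u d) (v d) &
        [forall i : 'I_n, (d < i) ==> ((u i == v d) && (v i == u d))]]].

Arguments cycle_adj k : clear implicits.
Arguments sierpinski_adj {V} adj n.

(* Main.v *)
Require Import Defs.
From mathcomp Require Import all_boot zify.

Set Implicit Arguments. Unset Strict Implicit. Unset Printing Implicit Defensive.

Definition sc (k a : nat) := if a.+1 == k then 0 else a.+1.
Definition nadj (k a c : nat) := (c == sc k a) || (a == sc k c).

Lemma succ_mod k a : a < k -> a.+1 %% k = sc k a.
Proof.
move=> h; rewrite /sc; case: eqP => [->|ne]; first by rewrite modnn.
rewrite modn_small //. lia.
Qed.

Lemma cadjE k (a c : 'I_k) : cycle_adj k a c = nadj k a c.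
Proof. by rewrite /cycle_adj /nadj !succ_mod. Qed.

Lemma cadj_sym k (a b : 'I_k) : cycle_adj k a b = cycle_adj k b a.
Proof. by rewrite /cycle_adj orbC. Qed.

Lemma cadj_irr k (a : 'I_k) : 1 < k -> cycle_adj k a a = false.
Proof.
move=> hk; rewrite cadjE /nadj /sc orbb; have := ltn_ord a.
case: ifP => h ha; apply/negP; lia.
Qed.

Lemma cadj_neq k (a b : 'I_k) : 1 < k -> cycle_adj k a b -> nat_of_ord a <> nat_of_ord b.
Proof. move=> hk hab e; move: hab; by rewrite (ord_inj e) cadj_irr. Qed.

Definition Hc (k d : nat) : nat := if d == 0 then 0 else if k - 2 <= d then 2
  else if (d.-1 %% 4 < 2) then 1 else 0.
Definition Dd (k a b : nat) := if a <= b then b - a else b + k - a.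

Lemma L_R (k p a c c' : nat) : 4 < k -> p < k -> a < k -> c < k -> c' < k ->
  nadj k a c -> nadj k a c' -> c != c' -> Hc k (Dd k p c) != Hc k (Dd k p c').
Proof.
move=> hk hp ha hc hc'. rewrite /nadj /sc /Hc /Dd.
case: (leqP p c) => ? /=; case: (leqP p c') => ? /=;
repeat (case: ifP => ?); lia.
Qed.

Lemma L_B1 (k a b c : nat) : 4 < k -> a < k -> b < k -> c < k ->
  nadj k a b -> nadj k a c -> Hc k (Dd k a b) != Hc k (Dd k b c).
Proof.
move=> hk ha hb hc. rewrite /nadj /sc /Hc /Dd.
case: (leqP a b) => ? /=; case: (leqP b c) => ? /=;
repeat (case: ifP => ?); lia.
Qed.

Lemma L_B2 (k a b c : nat) : 4 < k -> a < k -> b < k -> c < k ->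
  nadj k a b -> nadj k a c -> Hc k (Dd k b b) != Hc k (Dd k a c).
Proof.
move=> hk ha hb hc. rewrite /nadj /sc /Hc /Dd leqnn /=.
case: (leqP a c) => ? /=;
repeat (case: ifP => ?); lia.
Qed.

Definition T4 (a b : nat) : nat :=
  nth 0 (nth [::] [:: [::0;1;2;2]; [::1;0;2;2]; [::1;1;0;2]; [::1;1;2;0]] a) b.

Lemma T4R_all : all (fun p => all (fun a => all (fun c => all (fun c' =>
  (c != c') ==> nadj 4 a c ==> nadj 4 a c' ==> (T4 p c != T4 p c'))
  (iota 0 4)) (iota 0 4)) (iota 0 4)) (iota 0 4).
Proof. by []. Qed.

Lemma T4B1_all : all (fun a => all (fun b => all (fun c =>
  nadj 4 a b ==> nadj 4 a c ==> (T4 a b != T4 b c))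
  (iota 0 4)) (iota 0 4)) (iota 0 4).
Proof. by []. Qed.

Lemma T4B2_all : all (fun a => all (fun b => all (fun c =>
  nadj 4 a b ==> nadj 4 a c ==> (T4 b b != T4 a c))
  (iota 0 4)) (iota 0 4)) (iota 0 4).
Proof. by []. Qed.

Lemma in4 x : x < 4 -> x \in iota 0 4.
Proof. by rewrite mem_iota. Qed.

Definition Gn (k a b : nat) := if k == 4 then T4 a b else Hc k (Dd k a b).

Lemma Gn_lt3 (k a b : nat) : Gn k a b < 3.
Proof.
rewrite /Gn; case: ifP => _.
- rewrite /T4; case: a => [|[|[|[|a]]]]; case: b => [|[|[|[|b]]]]; by rewrite /= ?nth_nil.
- rewrite /Hc; case: ifP => _ //; case: ifP => _ //; case: ifP => _ //.
Qed.

Lemma Gn_R (k p a c c' : nat) : 3 < k -> p < k -> a < k -> c < k -> c' < k ->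
  nadj k a c -> nadj k a c' -> c != c' -> Gn k p c != Gn k p c'.
Proof.
move=> hk hp ha hc hc'; rewrite /Gn; case: (k =P 4) => [ek|nk]; last first.
  rewrite /=; have hk4 : 4 < k by lia. exact: L_R hk4 hp ha hc hc'.
subst k.
move: T4R_all => /allP/(_ _ (in4 hp))/allP/(_ _ (in4 ha))/allP/(_ _ (in4 hc))
  /allP/(_ _ (in4 hc')) h h1 h2 h3.
by move: h; rewrite h1 h2 h3.
Qed.

Lemma Gn_B1 (k a b c : nat) : 3 < k -> a < k -> b < k -> c < k ->
  nadj k a b -> nadj k a c -> Gn k a b != Gn k b c.
Proof.
move=> hk ha hb hc; rewrite /Gn; case: (k =P 4) => [ek|nk]; last first.
  rewrite /=; have hk4 : 4 < k by lia. exact: L_B1 hk4 ha hb hc.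
subst k.
move: T4B1_all => /allP/(_ _ (in4 ha))/allP/(_ _ (in4 hb))/allP/(_ _ (in4 hc)) h h1 h2.
by move: h; rewrite h1 h2.
Qed.

Lemma Gn_B2 (k a b c : nat) : 3 < k -> a < k -> b < k -> c < k ->
  nadj k a b -> nadj k a c -> Gn k b b != Gn k a c.
Proof.
move=> hk ha hb hc; rewrite /Gn; case: (k =P 4) => [ek|nk]; last first.
  rewrite /=; have hk4 : 4 < k by lia. exact: L_B2 hk4 ha hb hc.
subst k.
move: T4B2_all => /allP/(_ _ (in4 ha))/allP/(_ _ (in4 hb))/allP/(_ _ (in4 hc)) h h1 h2.
by move: h; rewrite h1 h2.
Qed.

Definition Gk k (a b : 'I_k) : 'I_3 := inord (Gn k a b).

Lemma Gk_neq k (a b a' b' : 'I_k) : Gn k a b != Gn k a' b' -> Gk a b != Gk a' b'.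
Proof.
move=> h; apply/negP => /eqP /(congr1 val); rewrite /= !inordK ?Gn_lt3 //.
by move/eqP; rewrite (negbTE h).
Qed.



Definition upd m k (x : {ffun 'I_m.+2 -> 'I_k}) (c : 'I_k) : {ffun 'I_m.+2 -> 'I_k} :=
  [ffun i => if i == ord_max then c else x i].

Lemma lt_max m (d : 'I_m.+2) : d != ord_max -> d < m.+1.
Proof. move=> hd; have := ltn_ord d; move: hd; rewrite -val_eqE /=; lia. Qed.

Lemma sadj_cases m k (u x : {ffun 'I_m.+2 -> 'I_k}) :
  sierpinski_adj (cycle_adj k) m.+2 u x ->
  (exists c, u = upd x c /\ cycle_adj k c (x ord_max)) \/
  (exists d : 'I_m.+2, [/\ d != ord_max, cycle_adj k (u d) (x d),
      (forall i : 'I_m.+2, i < d -> u i = x i) &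
      (forall i : 'I_m.+2, d < i -> u i = x d /\ x i = u d)]).
Proof.
move=> /existsP [d /and3P [/forallP h1 hadj /forallP h2]].
case: (eqVneq d ord_max) => [hd|hd].
- left; exists (u ord_max); split; last by rewrite -hd.
  apply/ffunP => i; rewrite ffunE; case: eqP => [->//|/eqP ne].
  apply/eqP; apply: (implyP (h1 i)); rewrite hd /=; exact: lt_max.
- right; exists d; split=> //; move=> i hi.
  + by apply/eqP; apply: (implyP (h1 i)).
  + by have /andP [/eqP -> /eqP ->] := implyP (h2 i) hi.
Qed.

Lemma bridge_uniq m k (u w x : {ffun 'I_m.+2 -> 'I_k}) (d e : 'I_m.+2) : 1 < k ->
  d != ord_max -> cycle_adj k (u d) (x d) -> (forall i : 'I_m.+2, i < d -> u i = x i) ->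
  (forall i : 'I_m.+2, d < i -> u i = x d /\ x i = u d) ->
  e != ord_max -> cycle_adj k (w e) (x e) -> (forall i : 'I_m.+2, i < e -> w i = x i) ->
  (forall i : 'I_m.+2, e < i -> w i = x e /\ x i = w e) -> u = w.
Proof.
move=> hk hd ad ud1 ud2 he ae we1 we2.
have ltd : d < @ord_max m.+1 by exact: lt_max.
have lte : e < @ord_max m.+1 by exact: lt_max.
have xd := (ud2 _ ltd).2.
have xe := (we2 _ lte).2.
have de : d = e.
  apply/val_inj; case: (ltngtP d e) => [h|h|h] //.
  - have xe' := (ud2 _ h).2. move: ae; by rewrite xe' -xd xe cadj_irr.
  - have xd' := (we2 _ h).2. move: ad; by rewrite xd' -xe xd cadj_irr.
subst e. apply/ffunP => i. case: (ltngtP i d) => h.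
- by rewrite ud1 // we1.
- by rewrite (ud2 _ h).1 (we2 _ h).1.
- have -> : i = d by apply/val_inj. by rewrite -xd xe.
Qed.

Lemma framework m k (f : {ffun 'I_m.+2 -> 'I_k} -> 'I_3) : 1 < k ->
  (forall (x : {ffun 'I_m.+2 -> 'I_k}) (c c' : 'I_k), c != c' -> cycle_adj k (x ord_max) c -> cycle_adj k (x ord_max) c' ->
     f (upd x c) != f (upd x c')) ->
  (forall (u x : {ffun 'I_m.+2 -> 'I_k}) (d : 'I_m.+2) (c : 'I_k), d != ord_max -> cycle_adj k (u d) (x d) ->
      (forall i : 'I_m.+2, i < d -> u i = x i) ->
      (forall i : 'I_m.+2, d < i -> u i = x d /\ x i = u d) ->
      cycle_adj k (x ord_max) c -> f u != f (upd x c)) ->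
  injective_coloring (sierpinski_adj (cycle_adj k) m.+2) f.
Proof.
move=> hk HR HB u w neq feq [x /andP [hu hw]].
case: (sadj_cases hu) => [[cu [Eu au]]|[d [hd ad ud1 ud2]]];
case: (sadj_cases hw) => [[cw [Ew aw]]|[e [he ae we1 we2]]].
- subst u w. have ne : cu != cw by apply: contraNneq neq => ->.
  move: (HR x cu cw ne). rewrite !(cadj_sym (x ord_max)) au aw feq eqxx.
  by move=> /(_ isT isT).
- subst u. move: (HB w x e cu he ae we1 we2). rewrite cadj_sym au feq eqxx.
  by move=> /(_ isT).
- subst w. move: (HB u x d cw hd ad ud1 ud2). rewrite cadj_sym aw feq eqxx.
  by move=> /(_ isT).
- by move: neq; rewrite (bridge_uniq hk hd ad ud1 ud2 he ae we1 we2) eqxx.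
Qed.

Definition fG m k (G : 'I_k -> 'I_k -> 'I_3) (u : {ffun 'I_m.+2 -> 'I_k}) : 'I_3 :=
  G (u (inord m)) (u ord_max).

Lemma i0ne m : (inord m : 'I_m.+2) != ord_max.
Proof. by rewrite -val_eqE /= inordK //; lia. Qed.

Lemma fG_ok m k G : 1 < k ->
 (forall (p a c c' : 'I_k), c != c' -> cycle_adj k a c -> cycle_adj k a c' -> G p c != G p c') ->
 (forall (a b c : 'I_k), cycle_adj k a b -> cycle_adj k a c -> G a b != G b c) ->
 (forall (a b c : 'I_k), cycle_adj k a b -> cycle_adj k a c -> G b b != G a c) ->
 injective_coloring (sierpinski_adj (cycle_adj k) m.+2) (@fG m k G).
Proof.
move=> hk GR GB1 GB2. apply: framework => //.
- move=> x c c' ne ac ac'; rewrite /fG /upd !ffunE (negbTE (i0ne m)) !eqxx.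
  exact: GR ne ac ac'.
- move=> u x d c hd ad ud1 ud2 ac.
  have ltd : d < @ord_max m.+1 by exact: lt_max.
  have [ul xl] := ud2 _ ltd.
  rewrite /fG /upd !ffunE (negbTE (i0ne m)) eqxx ul.
  move: ac; rewrite xl => ac.
  have hdm : d <= m by have := lt_max hd; lia.
  case: (ltngtP d m) => h.
  + have hm : d < (inord m : 'I_m.+2) by rewrite inordK.
    have [ui xi] := ud2 (inord m) hm.
    rewrite ui xi. exact: GB2 ad ac.
  + lia.
  + have -> : (inord m : 'I_m.+2) = d by apply/val_inj; rewrite /= inordK.
    exact: GB1 ad ac.
Qed.


Definition wt (m i : nat) : nat := if i == m.+1 then 1 else 2 ^ (m - i).

Lemma wt_tail m j : j <= m -> \sum_((m - j).+1 <= i < m.+2) wt m i = 2 ^ j.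
Proof.
elim: j => [|j IH] hj.
- by rewrite subn0 big_nat1 /wt eqxx.
- have -> : (m - j.+1).+1 = m - j by lia.
  rewrite big_ltn; last by lia.
  rewrite IH; last by lia.
  rewrite /wt ifN; last by apply/negP; lia.
  have -> : m - (m - j) = j by lia.
  by rewrite expnS mul2n -addnn.
Qed.

Lemma tail_sum m (d : nat) : d <= m -> \sum_(i < m.+2 | d < i) wt m i = wt m d.
Proof.
move=> hd. rewrite -(big_mkord (fun i => d < i) (wt m)).
rewrite (@big_cat_nat _ _ _ d.+1) //; last by lia.
rewrite big_nat_cond big_pred0; last by move=> i /=; lia.
rewrite Monoid.simpm /=.
have -> : \sum_(d.+1 <= i < m.+2 | d < i) wt m i = \sum_(d.+1 <= i < m.+2) wt m i.
  rewrite big_nat_cond [RHS]big_nat_cond; apply: eq_bigl => i /=; lia.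
have := wt_tail (leq_subr d m). rewrite subKn // => ->.
by rewrite /wt ifN //; apply/negP; lia.
Qed.

Definition S3 m (y : {ffun 'I_m.+2 -> 'I_3}) : nat := \sum_(i < m.+2) wt m i * y i.

Lemma S3_split m (y : {ffun 'I_m.+2 -> 'I_3}) (d : 'I_m.+2) (e : nat) :
  d != ord_max -> (forall i : 'I_m.+2, d < i -> y i = e :> nat) ->
  S3 y = \sum_(i < m.+2 | i < d) wt m i * y i + wt m d * y d + wt m d * e.
Proof.
move=> hd he. rewrite /S3 (bigID (fun i : 'I_m.+2 => i < d)) /=.
rewrite [X in _ + X](bigD1 d) /=; last by rewrite ltnn.
have -> : \sum_(i < m.+2 | ~~ (i < d) && (i != d)) wt m i * y i
          = \sum_(i < m.+2 | d < i) wt m i * e.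
  apply: eq_big => [i|i hi].
  - rewrite -val_eqE /=. lia.
  - rewrite he //. move: hi; rewrite -val_eqE /=; lia.
rewrite -big_distrl /= tail_sum; last by have := lt_max hd; lia.
by rewrite addnA.
Qed.

Lemma S3_upd m (x : {ffun 'I_m.+2 -> 'I_3}) c :
  S3 (upd x c) = c + \sum_(i < m.+2 | i != ord_max) wt m i * x i.
Proof.
rewrite /S3 (bigD1 ord_max) //= /upd ffunE eqxx {1}/wt /= eqxx mul1n. congr (_ + _).
apply: eq_bigr => i hi. by rewrite ffunE (negbTE hi).
Qed.

Lemma upd_id m k (x : {ffun 'I_m.+2 -> 'I_k}) : upd x (x ord_max) = x.
Proof. apply/ffunP => i; rewrite ffunE; by case: eqP => [->|]. Qed.

Lemma S3_bridge m (u x : {ffun 'I_m.+2 -> 'I_3}) (d : 'I_m.+2) :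
  d != ord_max -> (forall i : 'I_m.+2, i < d -> u i = x i) ->
  (forall i : 'I_m.+2, d < i -> u i = x d /\ x i = u d) -> S3 u = S3 x.
Proof.
move=> hd ud1 ud2.
rewrite (@S3_split _ u d (x d) hd); last by move=> i h; rewrite (ud2 _ h).1.
rewrite (@S3_split _ x d (u d) hd); last by move=> i h; rewrite (ud2 _ h).2.
rewrite (eq_bigr (fun i : 'I_m.+2 => wt m i * x i)); last by move=> i h; rewrite ud1.
by rewrite -!addnA [wt m d * u d + _]addnC.
Qed.

Definition f3 m (y : {ffun 'I_m.+2 -> 'I_3}) : 'I_3 := inord (S3 y %% 3).

Lemma f3_ok m : injective_coloring (sierpinski_adj (cycle_adj 3) m.+2) (@f3 m).
Proof.
apply: framework => //.
- move=> x c c' ne _ _; rewrite /f3 !S3_upd.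
  apply/negP => /eqP /(congr1 val); rewrite /= !inordK ?ltn_mod //.
  have ne' : nat_of_ord c <> nat_of_ord c' by move=> e; move: ne; rewrite (ord_inj e) eqxx.
  have := ltn_ord c; have := ltn_ord c'. lia.
- move=> u x d c hd ad ud1 ud2 ac.
  rewrite /f3 (S3_bridge hd ud1 ud2) -{1}(upd_id x) !S3_upd.
  have := cadj_neq (isT : 1 < 3) ac.
  move=> ne; apply/negP => /eqP /(congr1 val); rewrite /= !inordK ?ltn_mod //.
  have := ltn_ord c; have := ltn_ord (x ord_max). lia.
Qed.


Lemma Gk_ok m k : 3 < k -> injective_coloring (sierpinski_adj (cycle_adj k) m.+2) (@fG m k (@Gk k)).
Proof.
move=> hk; apply: fG_ok; first by lia.
- move=> p a c c' ne; rewrite !cadjE => h1 h2; apply: Gk_neq.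
  exact: (Gn_R hk (ltn_ord p) (ltn_ord a) (ltn_ord c) (ltn_ord c') h1 h2 ne).
- move=> a b c; rewrite !cadjE => h1 h2; apply: Gk_neq.
  exact: (Gn_B1 hk (ltn_ord a) (ltn_ord b) (ltn_ord c) h1 h2).
- move=> a b c; rewrite !cadjE => h1 h2; apply: Gk_neq.
  exact: (Gn_B2 hk (ltn_ord a) (ltn_ord b) (ltn_ord c) h1 h2).
Qed.

Lemma upd_adj m k (x : {ffun 'I_m.+2 -> 'I_k}) c :
  cycle_adj k c (x ord_max) -> sierpinski_adj (cycle_adj k) m.+2 (upd x c) x.
Proof.
move=> h; apply/existsP; exists ord_max; apply/and3P; split.
- apply/forallP => i; apply/implyP => hi; rewrite ffunE.
  case: (i =P ord_max) => [e|_] //; by move: hi; rewrite e ltnn.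
- by rewrite ffunE eqxx.
- apply/forallP => i; apply/implyP => hi. have := ltn_ord i. rewrite /= in hi. lia.
Qed.

Lemma lower m k c : 2 < k -> injective_colorable (sierpinski_adj (cycle_adj k) m.+2) c -> 3 <= c.
Proof.
move=> hk [f hf].
have h0 : 0 < k by lia. have h1 : 1 < k by lia.
pose l0 := Ordinal h0. pose l1 := Ordinal h1. pose l2 := Ordinal hk.
pose x : {ffun 'I_m.+2 -> 'I_k} := [ffun i => if i == ord_max then l1 else l0].
pose u : {ffun 'I_m.+2 -> 'I_k} := [ffun i => if i == (inord m) then l1 else l0].
pose y0 := upd x l0. pose y2 := upd x l2.
have a01 : cycle_adj k l0 l1 by rewrite /cycle_adj /= (modn_small h1) eqxx.
have a21 : cycle_adj k l2 l1 by rewrite /cycle_adj /= (modn_small hk) eqxx orbT.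
have xmax : x ord_max = l1 by rewrite ffunE eqxx.
have ad0 : sierpinski_adj (cycle_adj k) m.+2 y0 x by apply: upd_adj; rewrite xmax.
have ad2 : sierpinski_adj (cycle_adj k) m.+2 y2 x by apply: upd_adj; rewrite xmax.
have hm : m < m.+2 by lia.
have adu : sierpinski_adj (cycle_adj k) m.+2 u x.
  apply/existsP; exists (inord m); apply/and3P; split.
  - apply/forallP => i; apply/implyP; rewrite inordK // => hi.
    rewrite !ffunE; case: (i =P inord m) => [e|_]; first by move: hi; rewrite e inordK // ltnn.
    case: (i =P ord_max) => [e|_] //; move: hi; rewrite e /=; lia.
  - by rewrite !ffunE eqxx (negbTE (i0ne m)) cadj_sym.
  - apply/forallP => i; apply/implyP; rewrite inordK // => hi.
    have ei : i = ord_max by apply/val_inj; have := ltn_ord i; rewrite /=; lia.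
    have h' : (ord_max == inord m :> 'I_m.+2) = false by rewrite eq_sym (negbTE (i0ne m)).
    by rewrite ei /u /x !ffunE h' (negbTE (i0ne m)) !eqxx.
have key : forall a b, a != b -> sierpinski_adj (cycle_adj k) m.+2 a x ->
    sierpinski_adj (cycle_adj k) m.+2 b x -> nat_of_ord (f a) <> nat_of_ord (f b).
  move=> a b ab ha hb e; apply: (hf a b ab (ord_inj e)); exists x; by rewrite ha hb.
have val_im : forall (y : {ffun 'I_m.+2 -> 'I_k}), y (inord m) = l0 -> u != y.
  move=> y hy; apply/eqP => e; move: hy; rewrite -e ffunE eqxx => /(congr1 val) /=.
  by [].
have y0m : y0 (inord m) = l0 by rewrite ffunE (negbTE (i0ne m)) ffunE (negbTE (i0ne m)).
have y2m : y2 (inord m) = l0 by rewrite ffunE (negbTE (i0ne m)) ffunE (negbTE (i0ne m)).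
have n02 : y0 != y2.
  apply/eqP => e; have := congr1 (fun z : {ffun 'I_m.+2 -> 'I_k} => nat_of_ord (z ord_max)) e.
  rewrite /= !ffunE eqxx /=; lia.
have e1 := key _ _ (val_im _ y0m) adu ad0.
have e2 := key _ _ (val_im _ y2m) adu ad2.
have e3 := key _ _ n02 ad0 ad2.
have := ltn_ord (f u); have := ltn_ord (f y0); have := ltn_ord (f y2). lia.
Qed.


Theorem mainTheorem3 (n k : nat) (hn : 2 <= n) (hk : 3 <= k) :
  injective_chromatic_number (sierpinski_adj (cycle_adj k) n) 3.
Proof.
case: n hn => [|[|m]] // _.
split; last by move=> c; apply: lower.
case: (ltngtP k 3) => hk3.
- lia.
- exists (@fG m k (@Gk k)). exact: Gk_ok.
- subst k. exists (@f3 m). exact: f3_ok.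
Qed.
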